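(* Let $T>0$ and let $a_0,b_0,\psi_0,\rho\in\mathbb{R}$ satisfy $a_0,b_0,\psi_0\ge0$ and $\rho>a_0^2+2b_0+2\psi_0/T$. Let $\psi:[0,T]\to[0,+\infty)$ be absolutely continuous with $\psi(0)=\psi_0$ and $$\psi'+\rho\le a_0\rho^{1/2}+b_0\quad\text{a.e. in the set }P:=\{t\in(0,T):\psi(t)>0\}.$$ Then: (i) if $\psi_0=0$, then $\psi$ vanishes identically; (ii) if $\psi_0>0$, there exists $T^*\in(0,T)$ with $T^*\le 2\psi_0/(\rho-a_0^2-2b_0)$ such that $\psi$ is strictly decreasing in $(0,T^* )$ and $\psi$ vanishes in $[T^*,T]$. *)

(* Defs.v *)
From HB Require Import structures.
From mathcomp Require Import all_boot all_order all_algebra.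
From mathcomp Require Import all_classical all_reals all_analysis.
Set Implicit Arguments. Unset Strict Implicit. Unset Printing Implicit Defensive.
Import Order.TTheory GRing.Theory Num.Theory.
Import numFieldNormedType.Exports.
Local Open Scope ring_scope.
Local Open Scope classical_set_scope.

Definition abs_continuous_on {R : realType} (lo hi : R) (f : R -> R) : Prop :=
  forall eps : R, 0 < eps -> exists2 delta : R, 0 < delta &
    forall (n : nat) (a b : nat -> R),
      (forall k, (k < n)%N -> lo <= a k /\ a k <= b k /\ b k <= hi) ->
      (forall k, (k.+1 < n)%N -> b k <= a k.+1) ->
      \sum_(k < n) (b k - a k) < delta ->
      \sum_(k < n) `|f (b k) - f (a k)| < eps.

(* Main.v *)
Require Import Defs.
From HB Require Import structures.
From mathcomp Require Import all_boot all_order all_algebra.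
From mathcomp Require Import all_classical all_reals all_analysis.
From mathcomp Require Import ring lra.
Import Order.TTheory GRing.Theory Num.Theory.
Import numFieldNormedType.Exports.
Local Open Scope ring_scope.
Local Open Scope classical_set_scope.

Section Cousin.
Variable R : realType.

Definition finepart (d : R -> R) (s v : R) :=
  exists n (u x : nat -> R), [/\ u 0%N = s, u n = v &
    forall k, (k < n)%N -> [/\ u k <= x k, x k <= u k.+1 & u k.+1 - u k < d (x k)]].

Lemma cousin (d : R -> R) (s t : R) : s <= t -> (forall x, 0 < d x) -> finepart d s t.
Proof.
move=> st dpos.
pose S := [set v | s <= v <= t /\ finepart d s v].
have Ss : S s.
  split; first by rewrite lexx st.
  by exists 0%N, (fun=> s), (fun=> s); split.
have hS : has_sup S.
  split; first by exists s.
  by exists t => v [/andP[_ ?] _].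
set m := sup S.
have sm : s <= m by apply: sup_upper_bound.
have mt : m <= t.
  by apply: ge_sup; [exists s | move=> v [/andP[_ ?] _]].
have dm := dpos m.
have [v Sv vm] := sup_adherent (eps := d m / 2) (divr_gt0 dm (ltr0Sn _ 1)) hS.
rewrite -/m in vm.
have vlem : v <= m by apply: sup_upper_bound.
have ext : forall w, m <= w -> w <= t -> w - v < d m -> S w.
  move=> w mw wt wv; case: Sv => /andP[sv _] [n [u [x [u0 un hk]]]].
  rewrite /S /=; split; first by rewrite wt andbT (le_trans sm mw).
  exists n.+1, (fun k => if (k <= n)%N then u k else w),
    (fun k => if (k < n)%N then x k else m); split => //.
  - by rewrite ltnn.
  move=> k; rewrite ltnS leq_eqVlt => /predU1P[->|kn].
    rewrite eqxx ltnn /= un; split => //; apply: le_trans mw.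
  by rewrite kn orbT; apply: hk.
have [tle|tgt] := leP t (m + d m / 2).
  have St : S t.
    apply: ext => //; lra.
  by case: St.
exfalso.
have Sw : S (m + d m / 2).
  apply: ext; last 2 first.
  - exact: ltW.
  - lra.
  by rewrite lerDl divr_ge0 // ltW.
have := sup_upper_bound hS Sw; rewrite -/m.
rewrite gerDl leNgt => /negP; apply; exact: divr_gt0.
Qed.

Lemma part_mono (n : nat) (u x : nat -> R) (d : R -> R) :
  (forall k, (k < n)%N -> [/\ u k <= x k, x k <= u k.+1 & u k.+1 - u k < d (x k)]) ->
  forall i j, (i <= j)%N -> (j <= n)%N -> u i <= u j.
Proof.
move=> hk i; elim=> [|j IH].
  by rewrite leqn0 => /eqP -> _.
rewrite leq_eqVlt => /predU1P[-> //|ij] jn.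
have [h1 h2 _] := hk j jn.
apply: le_trans (IH ij (ltnW jn)) _; exact: le_trans h2.
Qed.

Lemma mono (g : R -> R) (s t : R) (E : set R) :
  s < t -> (@lebesgue_measure R).-negligible E ->
  abs_continuous_on s t g ->
  (forall x, s < x < t -> ~ E x -> exists2 r, 0 < r & forall z, `|z - x| < r ->
      (x <= z -> g z <= g x) /\ (z <= x -> g x <= g z)) ->
  g t <= g s.
Proof.
move=> st negE hac hloc.
suff H : forall eps, 0 < eps -> g t - g s < eps.
  rewrite leNgt; apply/negP => lt.
  have := H (g t - g s); rewrite subr_gt0 => /(_ lt); by rewrite ltxx.
move=> eps eps0.
have [delta delta0 hd] := hac eps eps0.
pose E' := E `|` [set s] `|` [set t].
have negE' : (@lebesgue_measure R).-negligible E'.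
  have n1 : forall a : R, (@lebesgue_measure R).-negligible [set a].
    by move=> a; exists [set a]; split => //; exact: lebesgue_measure_set1.
  by apply: negligibleU; [apply: negligibleU|].
have [A [mA A0 EA]] := negE'.
have Afin : (lebesgue_measure A < +oo)%E by rewrite A0 ltry.
have [U [oU AU UA]] := @lebesgue_regularity_outer R A delta mA Afin delta0.
have mU : measurable U by exact: measurable_realfun.open_measurable.
have muU : (lebesgue_measure U < delta%:E)%E.
  apply: le_lt_trans UA.
  have h1 : (lebesgue_measure U <= lebesgue_measure ((U `\` A) `|` A))%E.
    apply: le_measure.
    - by rewrite inE.
    - by rewrite inE; apply: measurableU => //; exact: measurableD.
    - by move=> z Uz; have [Az|nAz] := pselect (A z); [right|left].
  apply: (le_trans h1); apply: (le_trans (measureU2 _ _ _)) => //; first exact: measurableD.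
  by rewrite [X in (_ + X <= _)%E]A0 adde0.
have G : forall y, exists r : R, 0 < r /\ (E' y -> forall z, `|z - y| < r -> U z) /\ (~ E' y -> s < y < t -> forall z, `|z - y| < r ->
      (y <= z -> g z <= g y) /\ (z <= y -> g y <= g z)).
  move=> y; have [Ey|nEy] := pselect (E' y).
    have : nbhs y U by apply: open_nbhs_nbhs; split => //; exact: AU (EA _ Ey).
    move/nbhs_ballP => [r r0 sub]; exists r; split => //; split => // _ z zr.
    apply: sub; rewrite -ball_normE /= distrC; exact: zr.
  have [sty|nsty] := pselect (s < y < t).
    have [r r0 hr] := hloc y sty (fun Ey => nEy (or_introl (or_introl Ey))).
    by exists r; split => //; split => // _ _.
  by exists 1; split => //; split => // _ /nsty.
have [d hdd] := choice G.
have dpos : forall y, 0 < d y by move=> y; case: (hdd y).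
have [n [u [x [u0 un hk]]]] := @cousin d s t (ltW st) dpos.
have um := @part_mono _ _ _ _ hk.
pose bad k := `[< E' (x k) >].
pose b k := if bad k then u k.+1 else u k.
have ab k : (k < n)%N -> u k <= b k.
  by move=> kn; rewrite /b; case: ifP => // _; have [h1 h2 _] := hk k kn; exact: le_trans h2.
have bu k : (k < n)%N -> b k <= u k.+1.
  by move=> kn; rewrite /b; case: ifP => // _; have [h1 h2 _] := hk k kn; exact: le_trans h2.
have sum_len : \sum_(k < n) (b k - u k) < delta.
  pose J k := `]u k, b k]%classic : set R.
  have mJ : forall k, measurable (J k) by move=> k; exact: measurable_itv.
  have muJ : forall k, (k < n)%N -> lebesgue_measure (J k) = (b k - u k)%:E.
    move=> k kn; rewrite lebesgue_measure_itv /= lte_fin.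
    case: ltP => [_|ba]; first by rewrite EFinB.
    have := ab k kn => ab'; have -> : b k = u k by apply/eqP; rewrite eq_le ab' ba.
    by rewrite subrr.
  have trJ : trivIset `I_n J.
    have key : forall i j z, (i < j)%N -> (j < n)%N -> J i z -> J j z -> False.
      move=> i j z ij jn; rewrite /J /= !in_itv /= => /andP[_ zb] /andP[uz _].
      have : b i <= u j := le_trans (bu i (ltn_trans ij jn)) (um _ _ ij (ltnW jn)).
      lra.
    move=> i j /= iI jI [z [Jiz Jjz]].
    case: (ltngtP i j) => // ij; exfalso.
      exact: (key i j z ij jI Jiz Jjz).
    exact: (key j i z ij iI Jjz Jiz).
  have mU' : measurable (\big[setU/set0]_(k < n) J k).
    by apply: bigsetU_measurable => k _.
  have eqm := measure_semi_additive_ord_I lebesgue_measure (fun k _ => mJ k) trJ mU'.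
  have sub : \big[setU/set0]_(k < n) J k `<=` U.
    rewrite -bigcup_mkord => z [k /= kn Jz].
    move: Jz; rewrite /J /= in_itv /= => /andP[uz zb].
    move: zb; rewrite /b; case: ifP => [bk zb|_ zu]; last by exfalso; lra.
    have Ek : E' (x k) by apply/asboolP.
    have [_ [hU _]] := hdd (x k).
    apply: (hU Ek); have [h1 h2 h3] := hk k kn.
    rewrite ltr_norml; apply/andP; split; lra.
  have : (\sum_(k < n) lebesgue_measure (J k) < delta%:E)%E.
    rewrite -eqm; apply: le_lt_trans muU; apply: le_measure => //; by rewrite inE.
  rewrite (eq_bigr (fun k : 'I_n => (b k - u k)%:E)); last by move=> k _; exact: muJ.
  by rewrite sumEFin lte_fin.
have hrng : forall k, (k < n)%N -> s <= u k /\ u k <= b k /\ b k <= t.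
  move=> k kn; split; first by rewrite -u0; apply: um => //; exact: ltnW.
  split; first exact: ab.
  by rewrite -un; apply: le_trans (bu k kn) _; apply: um.
have habs := hd n u b hrng (fun k kn => bu k (ltnW kn)) sum_len.
have tele : \sum_(k < n) (g (u k.+1) - g (u k)) = g t - g s.
  by rewrite -(big_mkord xpredT (fun k => g (u k.+1) - g (u k))) telescope_sumr // un u0.
rewrite -tele; apply: le_lt_trans habs; apply: ler_sum => k _.
have kn := ltn_ord k.
rewrite /b; case: ifP => [_|nb]; first exact: ler_norm.
rewrite subrr normr0 subr_le0.
have nE : ~ E' (x k).
  by move=> h; move: nb; rewrite /bad; move/negbT/negP; apply; apply/asboolP.
have [h1 h2 h3] := hk k kn.
have [s1 _] := hrng k kn.
have ut : u k.+1 <= t by rewrite -un; apply: um.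
have sx : s < x k < t.
  apply/andP; split; rewrite lt_neqAle.
    apply/andP; split; last exact: le_trans h1.
    by apply/eqP => e; apply: nE; left; right; rewrite /= e.
  apply/andP; split; last exact: le_trans ut.
  by apply/eqP => e; apply: nE; right; rewrite /= e.
have [_ [_ loc]] := hdd (x k).
have l1 := loc nE sx (u k).
have l2 := loc nE sx (u k.+1).
have n1 : `|u k - x k| < d (x k) by clear -h1 h2 h3; rewrite ltr_norml; apply/andP; split; lra.
have n2 : `|u k.+1 - x k| < d (x k) by clear -h1 h2 h3; rewrite ltr_norml; apply/andP; split; lra.
have [_ g1] := l1 n1; have [g2 _] := l2 n2.
exact: le_trans (g2 h2) (g1 h1).
Qed.


Lemma deriv_local (f : R -> R) (x c : R) : derivable f x 1 -> derive1 f x < - c ->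
  exists2 r, 0 < r & forall z, `|z - x| < r ->
     (x <= z -> f z + c * z <= f x + c * x) /\ (z <= x -> f x + c * x <= f z + c * z).
Proof.
move=> df dlt.
have hc : (fun h => h^-1 *: ((f \o shift x) (h *: 1) - f x)) @ 0^' --> 'D_1 f x := df.
rewrite -derive1E in hc.
have := @cvgr_lt _ _ (0^' : set_system R) _ _ _ hc _ dlt.
have FF : Filter (0^' : set_system R) by exact: _.
move=> /(_ FF); rewrite nearE /dnbhs /within /= => /nbhs_ballP[r r0 hr].
exists r => // z zr.
have [zx|zx] := eqVneq z x.
  by rewrite zx; split.
have hz : z - x != 0 by rewrite subr_eq0.
have := hr (z - x); rewrite -ball_normE /= sub0r normrN => /(_ zr hz).
rewrite /= scaler1 subrK.
set D := f z - f x; set h := z - x => hq.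
have eD : f z - f x = h * (h^-1 *: D) by change (h^-1 *: D) with (h^-1 * D); rewrite mulVKf.
move: hq eD; set q := h^-1 *: D => hq eD.
have eh : h = z - x by [].
clearbody q h D.
split => hxz.
  have hp : 0 < h by rewrite eh subr_gt0 lt_neqAle eq_sym zx hxz.
  have : f z - f x < (z - x) * (- c) by rewrite eD -eh ltr_pM2l.
  lra.
have hp : h < 0 by rewrite eh subr_lt0 lt_neqAle zx hxz.
have : (z - x) * (- c) < f z - f x by rewrite eD -eh ltr_nM2l.
lra.
Qed.


Lemma ac_sub (lo hi s t : R) (f : R -> R) : abs_continuous_on lo hi f ->
  lo <= s -> t <= hi -> abs_continuous_on s t f.
Proof.
move=> hac ls th eps eps0; have [d d0 hd] := hac eps eps0.
exists d => // n a b hab hord hs; apply: hd => // k kn.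
have [h1 [h2 h3]] := hab k kn; split; first exact: le_trans h1.
by split => //; exact: le_trans th.
Qed.

Lemma ac_lin (s t k : R) (f : R -> R) : abs_continuous_on s t f -> 0 <= k ->
  abs_continuous_on s t (fun z => f z + k * z).
Proof.
move=> hac k0 eps eps0.
have e2 : 0 < eps / 2 by apply: divr_gt0.
have [d1 d10 hd1] := hac (eps / 2) e2.
have k1 : 0 < 2 * (k + 1) by apply: mulr_gt0 => //; lra.
set w := eps / (2 * (k + 1)).
have w0 : 0 < w by apply: divr_gt0.
have ew : w * (2 * (k + 1)) = eps by rewrite /w divfK // gt_eqF.
exists (Num.min d1 w); first by rewrite lt_min d10 w0.
move=> n a b hab hord hsum.
have s1 : \sum_(i < n) (b i - a i) < d1 by apply: lt_le_trans hsum _; rewrite ge_min lexx.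
have s2 : \sum_(i < n) (b i - a i) < w by apply: lt_le_trans hsum _; rewrite ge_min lexx orbT.
have H1 := hd1 n a b hab hord s1.
have step : \sum_(i < n) `|f (b i) + k * b i - (f (a i) + k * a i)| <=
    \sum_(i < n) `|f (b i) - f (a i)| + k * \sum_(i < n) (b i - a i).
  rewrite mulr_sumr -big_split /=; apply: ler_sum => i _.
  have [_ [h2 _]] := hab i (ltn_ord i).
  have -> : f (b i) + k * b i - (f (a i) + k * a i) = (f (b i) - f (a i)) + k * (b i - a i) by ring.
  apply: le_trans (ler_normD _ _) _; rewrite lerD2l ger0_norm //.
  by apply: mulr_ge0 => //; rewrite subr_ge0.
have hk : k * \sum_(i < n) (b i - a i) <= k * w by apply: ler_wpM2l => //; exact: ltW.
apply: le_lt_trans step _; lra.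
Qed.

Lemma ac_cont (lo hi : R) (f : R -> R) : abs_continuous_on lo hi f ->
  forall x, lo <= x <= hi -> forall eps, 0 < eps -> exists2 d, 0 < d &
  forall y, lo <= y <= hi -> `|y - x| < d -> `|f y - f x| < eps.
Proof.
move=> hac x /andP[lx xh] eps eps0; have [d d0 hd] := hac eps eps0.
exists d => // y /andP[ly yh] yd.
have [xy|yx] := leP x y.
  have h1 : forall k, (k < 1)%N -> lo <= x /\ x <= y /\ y <= hi by move=> k _.
  have h3 : \sum_(k < 1) ((fun=> y) k - (fun=> x) k) < d.
    by rewrite big_ord1; exact: le_lt_trans (ler_norm _) yd.
  by have := hd 1%N (fun=> x) (fun=> y) h1 (fun k (kn : (k.+1 < 1)%N) => False_ind _ (notF kn)) h3; rewrite big_ord1.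
have h1 : forall k, (k < 1)%N -> lo <= y /\ y <= x /\ x <= hi by move=> k _; split => //; split => //; exact: ltW.
have h3 : \sum_(k < 1) ((fun=> x) k - (fun=> y) k) < d.
  by rewrite big_ord1; rewrite distrC in yd; exact: le_lt_trans (ler_norm _) yd.
by have := hd 1%N (fun=> y) (fun=> x) h1 (fun k (kn : (k.+1 < 1)%N) => False_ind _ (notF kn)) h3; rewrite big_ord1 distrC.
Qed.

End Cousin.

Theorem lemma4p1 (R : realType) (T a0 b0 psi0 rho : R) (psi : R -> R)
  (hT : 0 < T) (ha0 : 0 <= a0) (hb0 : 0 <= b0) (hpsi0 : 0 <= psi0)
  (hrho : a0 ^+ 2 + 2 * b0 + 2 * psi0 / T < rho)
  (hnonneg : forall t, 0 <= t <= T -> 0 <= psi t)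
  (hac : abs_continuous_on 0 T psi)
  (hinit : psi 0 = psi0)
  (hineq : exists N : set R,
      (@lebesgue_measure R).-negligible N /\
      forall t, 0 < t < T -> 0 < psi t -> ~ N t ->
        derivable psi t 1 /\ derive1 psi t + rho <= a0 * Num.sqrt rho + b0) :
  (psi0 = 0 -> forall t, 0 <= t <= T -> psi t = 0) /\
  (0 < psi0 -> exists Ts : R,
      [/\ 0 < Ts < T,
          Ts <= 2 * psi0 / (rho - a0 ^+ 2 - 2 * b0),
          (forall s t, 0 < s -> s < t -> t < Ts -> psi t < psi s) &
          (forall t, Ts <= t <= T -> psi t = 0)]).
Proof.
have [N [negN hN]] := hineq.
have pT : 0 <= 2 * psi0 / T by apply: divr_ge0 => //; [apply: mulr_ge0 | exact: ltW].
set c := (rho - a0 ^+ 2 - 2 * b0) / 2.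
have cpos : 0 < c by rewrite /c; lra.
have rho0 : 0 <= rho by nra.
have hder : forall x, 0 < x < T -> 0 < psi x -> ~ N x ->
    derivable psi x 1 /\ derive1 psi x <= - c.
  move=> x hx px nx; have [dx hx'] := hN x hx px nx; split => //.
  have sq : Num.sqrt rho ^+ 2 = rho by rewrite sqr_sqrtr.
  have := sqr_ge0 (a0 - Num.sqrt rho).
  rewrite /c; nra.
have K : forall s t, 0 <= s -> s < t -> t <= T -> (forall z, s < z < t -> 0 < psi z) ->
    psi t <= psi s - c * (t - s).
  move=> s t s0 st tT hpos.
  have M : forall c', 0 <= c' -> c' < c -> psi t + c' * t <= psi s + c' * s.
    move=> c' c'0 c'c.
    apply: (@mono R (fun z => psi z + c' * z) s t N st negN).
      by apply: ac_lin => //; apply: ac_sub hac s0 tT.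
    move=> x /andP[sx xt] nx.
    have hx : 0 < x < T by apply/andP; split; lra.
    have [dx dlt] := hder x hx (hpos x (introT andP (conj sx xt))) nx.
    by apply: deriv_local => //; lra.
  apply/ler_addgt0Pr => e e0.
  have ts : 0 < t - s by lra.
  set w := e / (t - s).
  have w0 : 0 < w by apply: divr_gt0.
  have ew : w * (t - s) = e by rewrite /w divfK // gt_eqF.
  set m := Num.min (c / 2) w.
  have m0 : 0 < m by rewrite lt_min w0 andbT divr_gt0.
  have mc : m <= c / 2 by rewrite ge_min lexx.
  have hm : m * (t - s) <= e by rewrite -ew ler_wpM2r ?ge_min ?lexx ?orbT // ltW.
  have cm1 : 0 <= c - m by lra.
  have cm2 : c - m < c by lra.
  have := M (c - m) cm1 cm2.
  lra.
have cont := @ac_cont R 0 T psi hac.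
have Z : forall t0, 0 <= t0 <= T -> psi t0 = 0 -> forall t, t0 <= t <= T -> psi t = 0.
  move=> t0 /andP[t00 t0T] pt0 t /andP[t0t tT].
  have t0' : 0 <= t <= T by rewrite tT andbT (le_trans t00).
  have pt := hnonneg t t0'.
  apply/eqP; rewrite eq_le pt andbT leNgt; apply/negP => ptpos.
  pose S := [set z | t0 <= z <= t /\ psi z <= 0].
  have St0 : S t0 by split; [rewrite lexx t0t | rewrite pt0].
  have hS : has_sup S by split; [exists t0 | exists t => z [/andP[_ ?] _]].
  set m := sup S.
  have t0m : t0 <= m by apply: sup_upper_bound.
  have mt : m <= t by apply: ge_sup; [exists t0 | move=> z [/andP[_ ?] _]].
  have mT : 0 <= m <= T by apply/andP; split; lra.
  have pm : psi m <= 0.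
    rewrite leNgt; apply/negP => pm.
    have [d d0 hd] := cont m mT (psi m) pm.
    have [z Sz zm] := sup_adherent d0 hS; rewrite -/m in zm.
    have zlem : z <= m by apply: sup_upper_bound.
    case: Sz => /andP[t0z zt] pz.
    have zT : 0 <= z <= T by apply/andP; split; lra.
    have : `|z - m| < d by rewrite ltr_norml; apply/andP; split; lra.
    move/(hd z zT); rewrite ltr_norml => /andP[h1 _]; lra.
  have mt' : m < t by rewrite lt_neqAle mt andbT; apply/eqP => e; move: pm; rewrite e; lra.
  have hpos : forall z, m < z < t -> 0 < psi z.
    move=> z /andP[mz zt]; rewrite ltNge; apply/negP => pz.
    have : S z by split => //; apply/andP; split; lra.
    move/(sup_upper_bound hS); rewrite -/m; lra.
  have := K m t (le_trans t00 t0m) mt' tT hpos.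
  have : 0 < c * (t - m) by apply: mulr_gt0 => //; lra.
  lra.
split.
  move=> p0 t ht; apply: (Z 0) => //; first by rewrite lexx ltW.
  by rewrite hinit.
move=> p0.
set tau := 2 * psi0 / (rho - a0 ^+ 2 - 2 * b0).
have ctau : c * tau = psi0.
  rewrite /c /tau; field; apply/eqP => e; move: cpos; rewrite /c e; lra.
have tau0 : 0 < tau.
  rewrite /tau; apply: divr_gt0; [apply: mulr_gt0 => // | rewrite /c in cpos]; lra.
have hcT : psi0 < c * T.
  have : 2 * psi0 / T < 2 * c by rewrite /c; lra.
  rewrite ltr_pdivrMr //; lra.
have tauT : tau < T.
  have : c * tau < c * T by rewrite ctau.
  by rewrite ltr_pM2l.
clear hineq hN negN hder hrho pT hcT.
pose Q := [set z | 0 <= z <= T /\ forall w, 0 <= w <= z -> 0 < psi w].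
have Q0 : Q 0.
  split; first by rewrite lexx ltW.
  move=> w /andP[w0 w0']; have -> : w = 0 by apply/eqP; rewrite eq_le w0 w0'.
  by rewrite hinit.
have Qub : forall z, Q z -> z <= tau.
  move=> z [/andP[z0 zT] hz]; rewrite leNgt; apply/negP => tz.
  have hp : forall w, 0 < w < tau -> 0 < psi w.
    by move=> w /andP[w0 wt]; apply: hz; apply/andP; split; lra.
  have := K 0 tau (lexx _) tau0 (ltW tauT) hp.
  have : 0 < psi tau by apply: hz; apply/andP; split; lra.
  rewrite hinit subr0 ctau; lra.
have hQ : has_sup Q by split; [exists 0 | exists tau].
set Ts := sup Q.
have Ttau : Ts <= tau by apply: ge_sup => //; exists 0.
have Tpos : 0 < Ts.
  have z0 : (0:R) <= 0 <= T by apply/andP; split; lra.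
  have [d d0 hd] := cont 0 z0 psi0 p0; rewrite hinit in hd.
  set z := Num.min (d / 2) T.
  have zpos : 0 < z by rewrite lt_min hT andbT divr_gt0.
  have zd : z < d by apply: le_lt_trans (_ : d / 2 < d); [rewrite ge_min lexx | lra].
  have zT : z <= T by rewrite ge_min lexx orbT.
  have Qz : Q z.
    split; first by apply/andP; split; lra.
    move=> w /andP[w0 wz].
    have wT : 0 <= w <= T by apply/andP; split; lra.
    have : `|w - 0| < d by rewrite subr0 ger0_norm //; lra.
    move/(hd w wT); rewrite ltr_norml => /andP[h1 _]; lra.
  by apply: lt_le_trans zpos _; apply: sup_upper_bound.
have TsT : Ts < T by lra.
have below : forall w, 0 <= w -> w < Ts -> 0 < psi w.
  move=> w w0 wTs.
  have dw : 0 < Ts - w by lra.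
  have [z [_ hz] zw] := sup_adherent dw hQ.
  apply: hz; apply/andP; split => //; rewrite -/Ts in zw; lra.
have Tsr : 0 <= Ts <= T by apply/andP; split; lra.
have pTs : psi Ts = 0.
  apply/eqP; rewrite eq_le hnonneg // andbT leNgt; apply/negP => pp.
  have [d d0 hd] := cont Ts Tsr (psi Ts) pp.
  set z := Num.min (Ts + d / 2) T.
  have zT : z <= T by rewrite ge_min lexx orbT.
  have zgt : Ts < z by rewrite lt_min TsT andbT; lra.
  have zd : z <= Ts + d / 2 by rewrite ge_min lexx.
  have Qz : Q z.
    split; first by apply/andP; split; lra.
    move=> w /andP[w0 wz].
    have [wl|wr] := ltP w Ts; first exact: below.
    have wT : 0 <= w <= T by apply/andP; split; lra.
    have : `|w - Ts| < d by rewrite ltr_norml; apply/andP; split; lra.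
    move/(hd w wT); rewrite ltr_norml => /andP[h1 _]; lra.
  have := sup_upper_bound hQ Qz; rewrite -/Ts; lra.
exists Ts; split.
- by rewrite Tpos TsT.
- exact: Ttau.
- move=> s t s0 st tTs.
  have hp : forall z, s < z < t -> 0 < psi z.
    by move=> z /andP[sz zt]; apply: below; lra.
  have := K s t (ltW s0) st (ltW (lt_trans tTs TsT)) hp.
  have : 0 < c * (t - s) by apply: mulr_gt0 => //; lra.
  lra.
- by apply: Z.
Qed.
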